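(* Let $a,b,c \geq 0$ be integers and $k = a + 2b + 3c$ (so $E_2^aE_4^bE_6^c$ has weight $2k$). Define $s_{a,b,c}(n)$ by $\sum_{n\geq 0} s_{a,b,c}(n) q^n = E_2^a E_4^b E_6^c$. Then for all integers $n \geq 1$, $$|s_{a,b,c}(n)| \leq 109 \cdot 2^{2k-1} n^{2k-1} (1+\log(n))^k.$$
   Context: $E_2 = 1 - 24\sum_{n\geq1}\sigma_1(n)q^n$, $E_4 = 1 + 240\sum_{n \geq 1}\sigma_3(n)q^n$, $E_6 = 1 - 504\sum_{n\geq1}\sigma_5(n)q^n$, where $\sigma_\ell(n) = \sum_{d \mid n} d^\ell$, regarded as formal power series in $q$. *)

(* Defs.v *)
From mathcomp Require Import all_boot all_order all_algebra.
From mathcomp Require Import all_classical all_reals all_analysis.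
Set Implicit Arguments. Unset Strict Implicit. Unset Printing Implicit Defensive.
Import Order.TTheory GRing.Theory Num.Theory.
Local Open Scope ring_scope.

(* Formal power series in q with integer coefficients: n |-> coefficient of q^n. *)
Definition fps := nat -> int.

Definition sigma (l n : nat) : nat := (\sum_(1 <= d < n.+1 | d %| n) d ^ l)%N.

Definition E2 : fps := fun n => if n == 0%N then 1 else - 24 * (sigma 1 n)%:Z.
Definition E4 : fps := fun n => if n == 0%N then 1 else 240 * (sigma 3 n)%:Z.
Definition E6 : fps := fun n => if n == 0%N then 1 else - 504 * (sigma 5 n)%:Z.

Definition fps_mul (f g : fps) : fps := fun n => \sum_(i < n.+1) f i * g (n - i)%N.
Definition fps_one : fps := fun n => (n == 0%N)%:Z.
Definition fps_pow (f : fps) (k : nat) : fps := iter k (fps_mul f) fps_one.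

Definition s_abc (a b c : nat) : fps :=
  fps_mul (fps_pow E2 a) (fps_mul (fps_pow E4 b) (fps_pow E6 c)).

(* Main.v *)
Require Import Defs.
From mathcomp Require Import all_boot all_order all_algebra.
From mathcomp Require Import all_classical all_reals all_analysis.
From mathcomp Require Import ring lra zify.
Import Order.TTheory GRing.Theory Num.Theory.
Local Open Scope ring_scope.

Lemma midpt (R : realType) (h y : R) (p : nat) : 0 <= h -> h <= y ->
  2 * y ^+ p <= (y + h) ^+ p + (y - h) ^+ p /\
  2 * h * p.+1%:R * y ^+ p <= (y + h) ^+ p.+1 - (y - h) ^+ p.+1.
Proof.
move=> h0 hy; elim: p => [|p [IH1 IH2]].
  by rewrite !expr0 !expr1; split; lra.
have y0 : 0 <= y by lra.
have mono : (y - h) ^+ p.+1 <= (y + h) ^+ p.+1.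
  by rewrite lerXn2r // ?nnegrE; lra.
have yp : 0 <= y ^+ p by rewrite exprn_ge0.
split.
  have e : (y + h) ^+ p.+1 + (y - h) ^+ p.+1 =
     y * ((y + h) ^+ p + (y - h) ^+ p) + h * ((y + h) ^+ p - (y - h) ^+ p).
    by rewrite !exprS; ring.
  rewrite e exprS.
  have mono' : (y - h) ^+ p <= (y + h) ^+ p.
    by rewrite lerXn2r // ?nnegrE; lra.
  have := ler_wpM2l y0 IH1.
  have : 0 <= h * ((y + h) ^+ p - (y - h) ^+ p) by apply: mulr_ge0 => //; lra.
  nra.
have e : (y + h) ^+ p.+2 - (y - h) ^+ p.+2 =
   y * ((y + h) ^+ p.+1 - (y - h) ^+ p.+1) + h * ((y + h) ^+ p.+1 + (y - h) ^+ p.+1).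
  by rewrite !(exprS _ p.+1); ring.
rewrite e.
have A1 : 2 * y ^+ p.+1 <= (y + h) ^+ p.+1 + (y - h) ^+ p.+1.
  have e2 : (y + h) ^+ p.+1 + (y - h) ^+ p.+1 =
     y * ((y + h) ^+ p + (y - h) ^+ p) + h * ((y + h) ^+ p - (y - h) ^+ p).
    by rewrite !exprS; ring.
  rewrite e2 exprS.
  have mono' : (y - h) ^+ p <= (y + h) ^+ p.
    by rewrite lerXn2r // ?nnegrE; lra.
  have := ler_wpM2l y0 IH1.
  have : 0 <= h * ((y + h) ^+ p - (y - h) ^+ p) by apply: mulr_ge0 => //; lra.
  nra.
have := ler_wpM2l y0 IH2.
have := ler_wpM2l h0 A1.
rewrite [y ^+ p.+1]exprS -[(p.+2)%:R]natr1.
nra.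
Qed.


Lemma Pbnd (R : realType) (p n : nat) :
  \sum_(j < n.+1) (j%:R : R) ^+ p.+1 <= (n%:R + 1/2) ^+ p.+2 / p.+2%:R.
Proof.
elim: n => [|n IH].
  rewrite big_ord1 /= expr0n /=.
  by apply: divr_ge0; [apply: exprn_ge0; lra| apply: ler0n].
rewrite big_ord_recr /=.
have h1 : (1/2 : R) <= n.+1%:R by rewrite -(natr1 n); have := ler0n R n => ?; lra.
have h0 : (0 : R) <= 1/2 by lra.
have [_ M] := @midpt R (1/2) (n.+1%:R) p.+1 h0 h1.
have e1 : n.+1%:R - 1/2 = n%:R + 1/2 :> R by rewrite -(natr1 n); lra.
have e3 : 2 * (1/2) = 1 :> R by lra.
rewrite e1 e3 mul1r in M.
have p0 : 0 < p.+2%:R :> R by rewrite ltr0n.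
set A := (n%:R + 1/2 : R) ^+ p.+2 in IH M *.
set B := (n.+1%:R + 1/2 : R) ^+ p.+2 in M *.
have y1 : n.+1%:R ^+ p.+1 <= (B - A) / p.+2%:R by rewrite ler_pdivlMr // mulrC.
have eB : B / p.+2%:R = A / p.+2%:R + (B - A) / p.+2%:R by rewrite -mulrDl addrC subrK.
by rewrite eB; apply: lerD.
Qed.

Lemma Sbnd (R : realType) (p n : nat) :
  \sum_(j < n.+1) (n - j)%:R * (j%:R : R) ^+ p.+1 <=
    (n%:R : R) ^+ p.+3 / (p.+2%:R * p.+3%:R).
Proof.
have c0 : 0 < (p.+2%:R * p.+3%:R : R) by rewrite mulr_gt0 // ltr0n.
elim: n => [|n IH].
  rewrite big_ord1 /= expr0n /= mul0r.
  by apply: divr_ge0; [rewrite expr0n | apply: ltW].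
rewrite big_ord_recr /= subnn mul0r addr0.
have -> : \sum_(i < n.+1) (n.+1 - i)%:R * (i%:R : R) ^+ p.+1 =
   \sum_(i < n.+1) (n - i)%:R * (i%:R : R) ^+ p.+1 + \sum_(i < n.+1) (i%:R : R) ^+ p.+1.
  rewrite -big_split /=; apply: eq_bigr => i _.
  have -> : (n.+1 - i)%N = (n - i).+1 by rewrite subSn // -ltnS.
  by rewrite -(natr1 (n - i)) mulrDl mul1r.
have P := Pbnd R p n.
have h0 : (0 : R) <= 1/2 by lra.
have h1 : (1/2 : R) <= n%:R + 1/2 by have := ler0n R n => ?; lra.
have [_ M] := @midpt R (1/2) (n%:R + 1/2) p.+2 h0 h1.
have e1 : n%:R + 1/2 - 1/2 = n%:R :> R by lra.
have e2 : n%:R + 1/2 + 1/2 = n.+1%:R :> R by rewrite -(natr1 n); lra.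
have e3 : 2 * (1/2) = 1 :> R by lra.
rewrite e1 e2 e3 mul1r in M.
set A := (n%:R : R) ^+ p.+3 in IH M *.
set B := (n.+1%:R : R) ^+ p.+3 in M *.
set Y := (n%:R + 1/2 : R) ^+ p.+2 in P M *.
have p2 : 0 < p.+2%:R :> R by rewrite ltr0n.
have y1 : Y / p.+2%:R <= (B - A) / (p.+2%:R * p.+3%:R).
  have -> : Y / p.+2%:R = (p.+3%:R * Y) / (p.+2%:R * p.+3%:R).
    by field; rewrite -!natrD !pnatr_eq0.
  by rewrite ler_pM2r // invr_gt0.
have eB : B / (p.+2%:R * p.+3%:R) = A / (p.+2%:R * p.+3%:R) + (B - A) / (p.+2%:R * p.+3%:R)
  by rewrite -mulrDl addrC subrK.
rewrite eB; apply: lerD => //; exact: le_trans P y1.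
Qed.

Lemma sum_rev (R : realType) (n : nat) (F : nat -> nat -> R) :
  \sum_(i < n.+1) F i (n - i)%N = \sum_(i < n.+1) F (n - i)%N i.
Proof.
rewrite -(big_mkord xpredT (fun i => F i (n - i)%N)).
rewrite -(big_mkord xpredT (fun i => F (n - i)%N i)).
rewrite big_nat_rev /=; apply: eq_big_nat => i /andP[_ hi].
by rewrite add0n subSS subKn // -ltnS.
Qed.

Lemma convsum (R : realType) (q p n : nat) :
  \sum_(i < n.+1) (i%:R : R) ^+ q.+1 * ((n - i)%:R) ^+ p.+1 <=
    (n%:R : R) ^+ (q + p.+3) / (p.+2%:R * p.+3%:R).
Proof.
apply: le_trans (_ : _ <= \sum_(i < n.+1) (n%:R : R) ^+ q * ((i%:R) * ((n - i)%:R) ^+ p.+1)) _.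
  apply: ler_sum => i _.
  rewrite exprS -mulrA mulrCA.
  apply: ler_wpM2r; first by apply: mulr_ge0; [apply: ler0n | apply: exprn_ge0; apply: ler0n].
  by rewrite lerXn2r ?nnegrE ?ler0n // ler_nat -ltnS.
rewrite -mulr_sumr.
rewrite (sum_rev _ n (fun i j => (i%:R : R) * (j%:R) ^+ p.+1)).
rewrite exprD -mulrA.
apply: ler_wpM2l; first by apply: exprn_ge0; apply: ler0n.
have := Sbnd R p n.
by rewrite (eq_bigr (fun j : 'I_n.+1 => ((n - j)%:R : R) * (j%:R) ^+ p.+1)).
Qed.


Lemma ln_step (R : realType) m : (0 < m)%N ->
  ((m.+1)%:R : R)^-1 <= ln (m.+1%:R : R) - ln (m%:R).
Proof.
move=> m0.
have p1 : (0 : R) < m.+1%:R by rewrite ltr0n.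
have pm : (0 : R) < m%:R by rewrite ltr0n.
have i1 : ((m.+1)%:R : R)^-1 < 1 by rewrite invf_lt1 // ltr1n.
have i0 : 0 < ((m.+1)%:R : R)^-1 by rewrite invr_gt0.
have x1 : -1 < - ((m.+1)%:R : R)^-1 by rewrite ltrN2.
have := le_ln1Dx x1.
have e : 1 + - ((m.+1)%:R : R)^-1 = m%:R * (m.+1%:R)^-1.
  rewrite -(natr1 m); field; rewrite gt_eqF //; have := ler0n R m => ?; lra.
rewrite e lnM ?posrE ?invr_gt0 // lnV ?posrE //.
move: (((m.+1)%:R : R)^-1) => y; lra.
Qed.

Lemma harm (R : realType) m :
  \sum_(d < m.+1 | (0 < d)%N) (d%:R : R)^-1 <= 1 + ln (m%:R : R).
Proof.
rewrite big_mkcond /=.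
elim: m => [|m IH].
  rewrite big_ord1 /= ln0 //; lra.
rewrite big_ord_recr /=.
case: (posnP m) => [->|m0].
  rewrite big_ord1 /= ln1 invr1; lra.
move: (@ln_step R m m0) IH; move: (((m.+1)%:R : R)^-1) => y; lra.
Qed.

Lemma sigma_bnd (R : realType) l m : (0 < l)%N -> (0 < m)%N ->
  ((sigma l m)%:R : R) <= (m%:R : R) ^+ l * (1 + ln (m%:R : R)).
Proof.
move=> l0 m0.
pose P := fun d : 'I_m.+1 => (0 < d)%N && (d %| m)%N.
have E : sigma l m = (\sum_(d < m.+1 | P d) d ^ l)%N.
  rewrite /sigma /P.
  have -> : (\sum_(d < m.+1 | (0 < d) && (d %| m)) d ^ l = \sum_(0 <= d < m.+1 | (0 < d) && (d %| m)) d ^ l)%N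
    by rewrite big_mkord.
  rewrite big_mkcond [RHS]big_mkcond [RHS]big_nat_recl //= big_add1 /= add0n.
  by apply: eq_bigr.
rewrite E natr_sum.
pose h := fun d : 'I_m.+1 => if P d then (inord (m %/ d) : 'I_m.+1) else d.
have Ph : forall d, P d -> P (h d) /\ nat_of_ord (h d) = (m %/ d)%N.
  move=> d Pd; rewrite /h Pd.
  have dm : (m %/ d <= m)%N by apply: leq_div.
  have v : nat_of_ord (inord (m %/ d) : 'I_m.+1) = (m %/ d)%N by rewrite inordK // ltnS.
  split => //; rewrite /P v.
  case/andP: Pd => d0 dd.
  by rewrite divn_gt0 // dvdn_leq // dvdn_div.
have hh : involutive h.
  move=> d; case Pd : (P d); last by rewrite /h Pd Pd.
  have [Phd vhd] := Ph d Pd.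
  rewrite {1}/h Phd; apply: val_inj => /=.
  case/andP: Pd => d0 dd.
  rewrite vhd inordK; first by rewrite divnA // mulKn.
  by rewrite ltnS leq_div.
rewrite (reindex_inj (inv_inj hh)) /=.
have PP : forall d, P (h d) = P d.
  move=> d; case Pd : (P d); first by have [] := Ph d Pd.
  by rewrite /h Pd.
rewrite (eq_bigl P) //.
apply: le_trans (_ : _ <= \sum_(d < m.+1 | P d) (m%:R : R) ^+ l * (d%:R)^-1) _.
  apply: ler_sum => d Pd.
  have [_ vhd] := Ph d Pd.
  rewrite vhd.
  case/andP: Pd => d0 dd.
  have dR : (0 : R) < d%:R by rewrite ltr0n.
  rewrite natrX natr_div // ?unitfE ?gt_eqF // exprMn exprVn ler_wpM2l ?exprn_ge0 ?ler0n //.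
  rewrite lef_pV2 ?posrE ?exprn_gt0 //.
  by rewrite ler_eXnr // ler1n.
rewrite -mulr_sumr ler_wpM2l ?exprn_ge0 ?ler0n //.
apply: le_trans (harm R m).
rewrite [X in _ <= X]big_mkcond [X in X <= _]big_mkcond /=.
apply: ler_sum => d _; rewrite /P.
case: (0 < d)%N; case: (d %| m)%N => //=.
Qed.


Definition LL (R : realType) (m : nat) : R := 1 + ln (m%:R : R).

Lemma LL_ge1 (R : realType) m : (0 < m)%N -> 1 <= LL R m.
Proof. by move=> m0; rewrite /LL lerDl ln_ge0 // ler1n. Qed.

Lemma LL_mono (R : realType) i n : (0 < i)%N -> (i <= n)%N -> LL R i <= LL R n.
Proof.
move=> i0 iin; rewrite /LL lerD2l ler_ln ?posrE ?ltr0n ?ler_nat //.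
exact: leq_trans iin.
Qed.

Definition Bnd (R : realType) (f : fps) (k : nat) (h : R) :=
  f 0%N = 1 /\ forall m, (0 < m)%N ->
    `|(f m)%:~R : R| <= h * (m%:R : R) ^+ (2 * k).-1 * LL R m ^+ k.

Arguments Bnd {R}.

Lemma Bnd_ext (R : realType) f g k (h : R) : (forall m, f m = g m) -> Bnd f k h -> Bnd g k h.
Proof. by move=> e [f0 fb]; split; [rewrite -e | move=> m; rewrite -e; apply: fb]. Qed.

Lemma mul_one_r f m : fps_mul f fps_one m = f m.
Proof.
rewrite /fps_mul big_ord_recr /= subnn /fps_one /= mulr1 big1 ?add0r // => i _.
by rewrite /= subn_eq0 leqNgt ltn_ord mulr0.
Qed.

Lemma mul_one_l f m : fps_mul fps_one f m = f m.
Proof.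
rewrite /fps_mul big_ord_recl /= subn0 /fps_one /= mul1r big1 ?addr0 // => i _.
by rewrite /bump /= mul0r.
Qed.

Lemma Bnd_mul (R : realType) f g a b (h1 h2 : R) : 0 <= h1 -> 0 <= h2 ->
  Bnd f a.+1 h1 -> Bnd g b.+1 h2 ->
  Bnd (fps_mul f g) (a.+1 + b.+1) (h1 + h2 + h1 * h2 / ((2*b).+2%:R * (2*b).+3%:R)).
Proof.
move=> h10 h20 [f0 fb] [g0 gb]; split.
  by rewrite /fps_mul big_ord1 /= f0 g0.
case=> // n' _.
have ek : (2 * (a.+1 + b.+1)).-1 = (2*a + (2*b).+3)%N by lia.
have e1 : (2 * a.+1).-1 = (2*a).+1 by lia.
have e2 : (2 * b.+1).-1 = (2*b).+1 by lia.
rewrite ek; rewrite e1 in fb; rewrite e2 in gb.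
set n := n'.+1.
set N := (n%:R : R). set Ln := LL R n.
have Ln1 : 1 <= Ln by apply: LL_ge1.
have N1 : 1 <= N by rewrite ler1n.
have N0 : 0 <= N by lra.
have Ln0 : 0 <= Ln by lra.
set K := (a.+1 + b.+1)%N.
set T := N ^+ (2*a + (2*b).+3) * Ln ^+ K.
have bf : `|(f n)%:~R : R| <= h1 * T.
  apply: le_trans (fb n isT) _; rewrite /T -mulrA ler_wpM2l //.
  apply: ler_pM; try apply: exprn_ge0 => //.
    by apply: ler_weXn2l => //; lia.
  by apply: ler_weXn2l => //; rewrite /K; lia.
have bg : `|(g n)%:~R : R| <= h2 * T.
  apply: le_trans (gb n isT) _; rewrite /T -mulrA ler_wpM2l //.
  apply: ler_pM; try apply: exprn_ge0 => //.
    by apply: ler_weXn2l => //; lia.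
  by apply: ler_weXn2l => //; rewrite /K; lia.
set M := fun j : nat => (j%:R : R) ^+ (2*a).+1 * ((n - j)%:R) ^+ (2*b).+1.
have M0 : forall j, 0 <= M j.
  by move=> j; rewrite /M; apply: mulr_ge0; apply: exprn_ge0; apply: ler0n.
have bm : \sum_(i < n') `|(f (i.+1) * g (n - i.+1)%N)%:~R : R| <=
           h1 * h2 * Ln ^+ K * \sum_(i < n') M i.+1.
  rewrite mulr_sumr; apply: ler_sum => i _.
  have i1 : (0 < n - i.+1)%N by rewrite subn_gt0 /n ltnS.
  rewrite intrM normrM.
  apply: le_trans (ler_pM _ _ (fb i.+1 isT) (gb _ i1)) _; try apply: normr_ge0.
  have L1 : LL R i.+1 ^+ a.+1 <= Ln ^+ a.+1.
    have := (@LL_ge1 R i.+1 isT) => ?.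
    apply: lerXn2r; rewrite ?nnegrE; try lra.
    by apply: LL_mono => //; rewrite /n ltnS ltnW.
  have L2 : LL R (n - i.+1) ^+ b.+1 <= Ln ^+ b.+1.
    have := (@LL_ge1 R _ i1) => ?.
    apply: lerXn2r; rewrite ?nnegrE; try lra.
    by apply: LL_mono => //; rewrite leq_subr.
  have La : 0 <= LL R i.+1 ^+ a.+1 by apply: exprn_ge0; have := (@LL_ge1 R i.+1 isT); lra.
  have Lb : 0 <= LL R (n - i.+1) ^+ b.+1 by apply: exprn_ge0; have := (@LL_ge1 R _ i1); lra.
  have Pa : 0 <= (i.+1%:R : R) ^+ (2*a).+1 by apply: exprn_ge0; apply: ler0n.
  have Pb : 0 <= ((n - i.+1)%:R : R) ^+ (2*b).+1 by apply: exprn_ge0; apply: ler0n.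
  rewrite /M /K exprD.
  set A1 := LL R i.+1 ^+ a.+1 in L1 La *.
  set A2 := LL R (n - i.+1) ^+ b.+1 in L2 Lb *.
  set B1 := Ln ^+ a.+1 in L1 *.
  set B2 := Ln ^+ b.+1 in L2 *.
  set P1 := (i.+1%:R : R) ^+ (2*a).+1 in Pa *.
  set P2 := ((n - i.+1)%:R : R) ^+ (2*b).+1 in Pb *.
  have : A1 * A2 <= B1 * B2 by apply: ler_pM.
  have : 0 <= h1 * h2 * (P1 * P2) by apply: mulr_ge0; apply: mulr_ge0.
  nra.
have bM : \sum_(i < n') M i.+1 <= \sum_(j < n.+1) M j.
  rewrite /n big_ord_recl big_ord_recr /=.
  have -> : \sum_(i < n') M (bump 0 i) = \sum_(i < n') M i.+1 by [].
  have := M0 0%N; have := M0 (n'.+1); lra.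
have cs := convsum R (2*a) (2*b) n.
rewrite /fps_mul rmorph_sum; apply: le_trans (ler_norm_sum _ _ _) _.
rewrite big_ord_recl big_ord_recr /=.
rewrite subn0 f0 mul1r.
have -> : (n - n'.+1)%N = 0%N by rewrite subnn.
rewrite g0 mulr1.
have -> : \sum_(i < n') `|(f (bump 0 i) * g (n - bump 0 i)%N)%:~R : R| =
          \sum_(i < n') `|(f i.+1 * g (n - i.+1)%N)%:~R : R| by [].
have D0 : 0 < ((2*b).+2%:R * (2*b).+3%:R : R) by rewrite mulr_gt0 // ltr0n.
have hh : 0 <= h1 * h2 * Ln ^+ K by apply: mulr_ge0; [apply: mulr_ge0|apply: exprn_ge0].
have m1 := ler_wpM2l hh (le_trans bM cs).
have E : (h1 + h2 + h1 * h2 / ((2 * b).+2%:R * (2 * b).+3%:R)) * N ^+ (2 * a + (2 * b).+3) * Ln ^+ K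
  = h2 * T + h1 * h2 * Ln ^+ K * (N ^+ (2 * a + (2 * b).+3) / ((2 * b).+2%:R * (2 * b).+3%:R)) + h1 * T.
  rewrite /T; field.
  by apply/andP; split; rewrite gt_eqF //; have := ler0n R b => ?; lra.
rewrite E addrA.
have -> : bump 0 n' = n by [].
rewrite -/n.
apply: lerD; last by [].
apply: lerD; first by [].
exact: le_trans bm m1.
Qed.


Lemma Bnd_base (R : realType) (e : int) (ce : R) l w (E : fps) :
  (0 < l)%N -> (0 < w)%N -> (l <= (2 * w).-1)%N ->
  `|e%:~R : R| = ce ->
  (forall m, E m = if m == 0%N then 1 else e * (sigma l m)%:Z) ->
  Bnd E w ce.
Proof.
move=> l0 w0 lw ece EE; split; first by rewrite EE.
move=> m m0; rewrite EE gtn_eqF // intrM normrM ece.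
have L1 := @LL_ge1 R m m0.
have ce0 : 0 <= ce by rewrite -ece.
rewrite -mulrA ler_wpM2l //.
rewrite (_ : `|((sigma l m)%:Z)%:~R| = ((sigma l m)%:R : R)); last first.
  by rewrite -[((sigma l m)%:Z)%:~R]/((sigma l m)%:R) normr_nat.
apply: le_trans (@sigma_bnd R l m l0 m0) _.
apply: ler_pM; rewrite ?exprn_ge0 ?ler0n //; first by have := L1 => ?; rewrite /LL in L1; lra.
  by apply: ler_weXn2l; rewrite ?ler1n.
rewrite -/(LL R m).
rewrite -[X in X <= _]expr1; apply: ler_weXn2l => //.
Qed.

Lemma Bnd_E2 (R : realType) : Bnd (R:=R) E2 1 24.
Proof. by apply: (@Bnd_base R (-24) 24 1 1) => //; rewrite mulrNz normrN normr_nat. Qed.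
Lemma Bnd_E4 (R : realType) : Bnd (R:=R) E4 2 240.
Proof. by apply: (@Bnd_base R 240 240 3 2) => //; rewrite normr_nat. Qed.
Lemma Bnd_E6 (R : realType) : Bnd (R:=R) E6 3 504.
Proof. by apply: (@Bnd_base R (-504) 504 5 3) => //; rewrite mulrNz normrN normr_nat. Qed.

Lemma Bnd_le (R : realType) f k (h h' : R) : h <= h' -> Bnd f k h -> Bnd f k h'.
Proof.
move=> hh [f0 fb]; split => // m m0; apply: le_trans (fb m m0) _.
rewrite -!mulrA ler_wpM2r //; apply: mulr_ge0; apply: exprn_ge0; first exact: ler0n.
by have := @LL_ge1 R m m0 => ?; lra.
Qed.

Lemma Bnd_k (R : realType) f k k' (h : R) : k = k' -> Bnd f k h -> Bnd f k' h.
Proof. by move=> ->. Qed.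

Lemma Bnd_h0 (R : realType) f k (h : R) : Bnd f k h -> 0 <= h.
Proof.
move=> [_ fb]; have := fb 1%N isT.
rewrite expr1n mulr1 /LL ln1 addr0 expr1n mulr1 => H.
exact: le_trans (normr_ge0 _) H.
Qed.

Lemma Bnd_pow (R : realType) (E : fps) (w e : nat) :
  Bnd E w.+1 (e%:R : R) ->
  (forall J, (0 < J)%N -> e * J ^ 3 <= 2 * w.+1 * (2 * w.+1 * J + 1) * (4 * J ^ 3 + 6 * J ^ 2 + 4 * J))%N ->
  forall j, Bnd (fps_pow E j.+1) (w.+1 * j.+1) ((e * j.+1 ^ 4)%:R : R).
Proof.
move=> BE hyp; elim=> [|j IH].
  apply: (@Bnd_k R _ w.+1); first by rewrite muln1.
  rewrite exp1n muln1; apply: Bnd_ext BE => m /=; by rewrite mul_one_r.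
set b := (w.+1 * j.+1).-1.
have eb : (w.+1 * j.+1)%N = b.+1 by rewrite /b prednK // muln_gt0.
rewrite eb in IH.
have := @Bnd_mul R _ _ _ _ _ _ (ler0n _ _) (ler0n _ _) BE IH.
move=> H; apply: (@Bnd_k R _ (w.+1 + b.+1)%N); first by rewrite -eb; lia.
apply: Bnd_le H.
set J := j.+1.
have J0 : (0 < J)%N by [].
have d2 : (2 * b).+2 = (2 * w.+1 * J)%N by rewrite /J; lia.
have d3 : (2 * b).+3 = (2 * w.+1 * J + 1)%N by rewrite /J; lia.
rewrite d3 d2.
set D := (2 * w.+1 * J * (2 * w.+1 * J + 1))%N.
have D0 : (0 < D)%N by rewrite /D muln_gt0 /J; lia.
have key : ((e + e * J ^ 4) * D + e * (e * J ^ 4) <= e * J.+1 ^ 4 * D)%N.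
  have h1 := hyp J J0.
  have := leq_mul (leqnn (e * J)) h1.
  rewrite /D; nia.
rewrite -[X in _ / X]natrM -/D.
have DR : (0 : R) < D%:R by rewrite ltr0n.
have -> : (e%:R + (e * J ^ 4)%:R + e%:R * (e * J ^ 4)%:R / D%:R : R) =
   ((e + e * J ^ 4) * D + e * (e * J ^ 4))%:R / D%:R.
  rewrite !natrD !natrM; field.
  have Jr : (1 : R) <= J%:R by rewrite ler1n.
  have wr : (0 : R) <= w%:R by apply: ler0n.
  by apply/and3P; split; rewrite gt_eqF //; nra.
by rewrite ler_pdivrMr // -natrM ler_nat.
Qed.


Lemma P16 b : (0 < b)%N -> (16 * b ^ 4 <= 16 ^ b)%N.
Proof.
elim: b => // b IH _.
case: (posnP b) => [->|b0]; first by [].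
have := IH b0.
have : ((b.+1) ^ 4 <= 16 * b ^ 4)%N.
  have h : (b.+1 <= 2 * b)%N by lia.
  have h2 : (b.+1 ^ 4 <= (2 * b) ^ 4)%N by rewrite leq_exp2r.
  have e : (2 ^ 4 = 16)%N by [].
  rewrite expnMn e in h2; lia.
move=> H1 H2; rewrite (expnS 16); lia.
Qed.

Lemma P64 c : (0 < c)%N -> (64 * c ^ 4 <= 64 ^ c)%N.
Proof.
elim: c => // c IH _.
case: (posnP c) => [->|c0]; first by [].
have := IH c0.
have : ((c.+1) ^ 4 <= 64 * c ^ 4)%N.
  have h : (c.+1 <= 2 * c)%N by lia.
  have h2 : (c.+1 ^ 4 <= (2 * c) ^ 4)%N by rewrite leq_exp2r.
  have e : (2 ^ 4 = 16)%N by [].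
  rewrite expnMn e in h2; lia.
move=> H1 H2; rewrite (expnS 64); lia.
Qed.

Lemma P4 a : (a ^ 4 <= 2 * 4 ^ a)%N.
Proof.
elim: a => // a IH.
case: (leqP a 2) => ha.
  by case: a ha IH => [|[|[|]]].
have : ((a.+1) ^ 4 <= 4 * a ^ 4)%N.
  have h : (3 * a.+1 <= 4 * a)%N by lia.
  have : ((3 * a.+1) ^ 4 <= (4 * a) ^ 4)%N by rewrite leq_exp2r.
  have e : (3 ^ 4 = 81)%N by [].
  have e' : (4 ^ 4 = 256)%N by [].
  rewrite !expnMn e e'; lia.
move=> H1; rewrite (expnS 4); lia.
Qed.

Lemma Bnd_P2 (R : realType) a : Bnd (R:=R) (fps_pow E2 a.+1) a.+1 ((24 * a.+1 ^ 4)%:R).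
Proof.
apply: (@Bnd_k R _ (1 * a.+1)%N); first by rewrite mul1n.
apply: (@Bnd_pow R E2 0 24) => //; first exact: Bnd_E2.
by move=> J J0; nia.
Qed.

Lemma Bnd_P4 (R : realType) b : Bnd (R:=R) (fps_pow E4 b.+1) (2 * b.+1) ((240 * b.+1 ^ 4)%:R).
Proof.
apply: (@Bnd_pow R E4 1 240) => //; first exact: Bnd_E4.
by move=> J J0; nia.
Qed.

Lemma Bnd_P6 (R : realType) c : Bnd (R:=R) (fps_pow E6 c.+1) (3 * c.+1) ((504 * c.+1 ^ 4)%:R).
Proof.
apply: (@Bnd_pow R E6 2 504) => //; first exact: Bnd_E6.
by move=> J J0; nia.
Qed.

Lemma mul_ext f g g' m : (forall i, g i = g' i) -> fps_mul f g m = fps_mul f g' m.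
Proof. by move=> e; rewrite /fps_mul; apply: eq_bigr => i _; rewrite e. Qed.

Lemma frac_comb (R : realType) (x y d : R) : d != 0 -> x + y + x * y / d = ((x + y) * d + x * y) / d.
Proof. by move=> h; field. Qed.

Lemma R_bnd (R : realType) b c : (0 < 2 * b + 3 * c)%N ->
  exists hR : R, Bnd (fps_mul (fps_pow E4 b) (fps_pow E6 c)) (2 * b + 3 * c) hR /\
     0 <= hR /\ hR <= ((19 * 4 ^ (2 * b + 3 * c))%N)%:R.
Proof.
case: b => [|b']; case: c => [|c'] //= _.
- exists ((504 * c'.+1 ^ 4)%:R); split; last split; [|exact: ler0n|].
    apply: (@Bnd_k R _ (3 * c'.+1)); first by lia.
    by apply: Bnd_ext (Bnd_P6 R c') => m; rewrite mul_one_l.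
  rewrite ler_nat.
  have := @P64 c'.+1 isT.
  rewrite muln0 add0n expnM (_ : 4 ^ 3 = 64)%N //; lia.
- exists ((240 * b'.+1 ^ 4)%:R); split; last split; [|exact: ler0n|].
    apply: (@Bnd_k R _ (2 * b'.+1)); first by lia.
    by apply: Bnd_ext (Bnd_P4 R b') => m; rewrite mul_one_r.
  rewrite ler_nat.
  have := @P16 b'.+1 isT.
  rewrite muln0 addn0 expnM (_ : 4 ^ 2 = 16)%N //; lia.
have B4 : Bnd (R:=R) (fps_pow E4 b'.+1) (2 * b').+2 ((240 * b'.+1 ^ 4)%:R).
  by apply: (@Bnd_k R _ (2 * b'.+1)); [lia | exact: Bnd_P4].
have B6 : Bnd (R:=R) (fps_pow E6 c'.+1) (3 * c' + 2).+1 ((504 * c'.+1 ^ 4)%:R).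
  by apply: (@Bnd_k R _ (3 * c'.+1)); [lia | exact: Bnd_P6].
have := @Bnd_mul R _ _ _ _ _ _ (ler0n _ _) (ler0n _ _) B4 B6.
set D1 := (2 * (3 * c' + 2)).+2.
set D2 := (2 * (3 * c' + 2)).+3.
move=> H.
eexists; split; first by apply: (@Bnd_k R _ ((2 * b').+2 + (3 * c' + 2).+1)%N); [lia | exact: H].
set x := (240 * b'.+1 ^ 4)%N. set y := (504 * c'.+1 ^ 4)%N.
have DR : (0 : R) < (D1 * D2)%N%:R by rewrite ltr0n muln_gt0.
have gen : forall x0 y0 d1 d2 : nat, (0 < d1 * d2)%N ->
   (x0%:R + y0%:R + x0%:R * y0%:R / (d1%:R * d2%:R) : R) =
   ((x0 + y0) * (d1 * d2) + x0 * y0)%N%:R / (d1 * d2)%N%:R.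
  move=> x0 y0 d1 d2 hd; rewrite frac_comb; last by rewrite -natrM gt_eqF // ltr0n.
  by rewrite !(natrD, natrM).
rewrite gen; last by rewrite muln_gt0.
split; first by apply: divr_ge0; apply: ler0n.
rewrite ler_pdivrMr // -natrM ler_nat.
set X := (16 ^ b'.+1)%N. set Y := (64 ^ c'.+1)%N.
have eXY : (4 ^ (2 * b'.+1 + 3 * c'.+1) = X * Y)%N.
  by rewrite expnD !expnM.
rewrite eXY.
have f1 : (16 * b'.+1 ^ 4 <= X)%N by apply: P16.
have f2 : (64 * c'.+1 ^ 4 <= Y)%N by apply: P64.
have f3 : (16 <= X)%N by apply: leq_trans f1; rewrite leq_pmulr // expn_gt0.
have f4 : (64 <= Y)%N by apply: leq_trans f2; rewrite leq_pmulr // expn_gt0.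
have fD : (42 <= D1 * D2)%N by rewrite /D1 /D2; nia.
have g1 := leq_mul (leq_mul f1 (leqnn (D1 * D2))) f4.
have g2 := leq_mul (leq_mul f2 (leqnn (D1 * D2))) f3.
have g3 := leq_mul (leq_mul f1 f2) fD.
rewrite /x /y.
move: g1 g2 g3; clear eXY f1 f2 f3 f4 fD.
move: (b'.+1 ^ 4)%N (c'.+1 ^ 4)%N (D1 * D2)%N X Y => A C D X' Y' g1 g2 g3.
nia.
Qed.

Lemma final_bnd (R : realType) a b c : (0 < a + 2 * b + 3 * c)%N ->
  exists h : R, Bnd (s_abc a b c) (a + 2 * b + 3 * c) h /\ h <= 109 / 2 * 4 ^+ (a + 2 * b + 3 * c).
Proof.
move=> k0.
have half : forall x y : nat, (2 * x <= 109 * y)%N -> (x%:R : R) <= 109 / 2 * y%:R.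
  move=> x y; rewrite -(ler_nat R) !natrM => H; lra.
case: a k0 => [|a'] k0.
  have [hR [HR [hR0 hRle]]] := @R_bnd R b c k0.
  exists hR; split.
    apply: (@Bnd_k R _ (2 * b + 3 * c)%N); first by lia.
    by apply: Bnd_ext HR => m; rewrite /s_abc mul_one_l.
  apply: le_trans hRle _; rewrite -natrX; apply: half.
  by rewrite add0n; lia.
case: (posnP (2 * b + 3 * c)) => k2.
  have hb : b = 0%N by lia.
  have hc : c = 0%N by lia.
  subst b c.
  exists ((24 * a'.+1 ^ 4)%:R); split.
    apply: (@Bnd_k R _ a'.+1); first by lia.
    apply: Bnd_ext (Bnd_P2 R a') => m; rewrite /s_abc.
    rewrite (@mul_ext _ _ fps_one); first by rewrite mul_one_r.
    by move=> i; rewrite mul_one_l.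
  rewrite -natrX; apply: half.
  have := P4 a'.+1; rewrite !muln0 !addn0; lia.
have [hR [HR [hR0 hRle]]] := @R_bnd R b c k2.
set k2' := (2 * b + 3 * c).-1.
have ek2 : (2 * b + 3 * c)%N = k2'.+1 by rewrite /k2' prednK.
rewrite ek2 in HR hRle.
have := @Bnd_mul R _ _ _ _ _ _ (ler0n _ _) hR0 (Bnd_P2 R a') HR.
move=> H; eexists; split.
  apply: (@Bnd_k R _ (a'.+1 + k2'.+1)%N); first by lia.
  exact: H.
have k22 : (1 <= k2')%N by rewrite /k2'; lia.
set D := ((2 * k2').+2 * (2 * k2').+3)%N.
have D20 : (20 <= D)%N by rewrite /D; nia.
rewrite -natrM -/D.
have DR : (20 : R) <= D%:R by rewrite ler_nat.
set U := (4 : R) ^+ a'.+1.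
set T := (4 : R) ^+ k2'.+1.
have U4 : 4 <= U by rewrite /U exprS ler_peMr ?exprn_ege1 //; lra.
have T16 : 16 <= T.
  rewrite /T exprS.
  have : (4 : R) <= 4 ^+ k2' by case: (k2') k22 => // k _; rewrite exprS ler_peMr ?exprn_ege1 //; lra.
  lra.
have eK : (4 : R) ^+ (a'.+1 + 2 * b + 3 * c) = U * T.
  by rewrite /U /T -exprD -ek2 addnA.
rewrite eK.
set h2 := ((24 * a'.+1 ^ 4)%:R : R).
have h2le : h2 <= 48 * U.
  rewrite /h2 /U -natrX -natrM ler_nat.
  have := P4 a'.+1; lia.
have h20 : 0 <= h2 by apply: ler0n.
have hRle' : hR <= 19 * T by move: hRle; rewrite natrM natrX.
have p1 : h2 * hR <= (48 * U) * (19 * T) by apply: ler_pM.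
have UT0 : 0 <= U * T by nra.
have p2 : h2 * hR / D%:R <= (48 * U) * (19 * T) / 20.
  rewrite ler_pdivrMr; last by lra.
  apply: le_trans p1 _.
  have : 0 <= (48 * U) * (19 * T) * (D%:R - 20) by apply: mulr_ge0; [nra|lra].
  have e1 : (48 * U) * (19 * T) / 20 * D%:R = (48 * U) * (19 * T) * D%:R / 20 by rewrite mulrAC.
  rewrite e1 ler_pdivlMr; last by lra.
  lra.
have q1 : 0 <= (T - 16) * U by nra.
have q2 : 0 <= (U - 4) * T by nra.
move: p2; set P := h2 * hR / D%:R => p2.
have e2 : (48 * U) * (19 * T) / 20 = 912 / 20 * (U * T) by rewrite mulrC; field.
rewrite e2 in p2.
nra.
Qed.


Theorem lemma3p2 (R : realType) (a b c n : nat) : (1 <= n)%N ->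
  let k : nat := (a + 2 * b + 3 * c)%N in
  `|(s_abc a b c n)%:~R : R|
    <= 109 * (2 : R) ^ (2 * (k : int) - 1) * (n%:R : R) ^ (2 * (k : int) - 1)
       * (1 + ln (n%:R : R)) ^+ k.
Proof.
move=> n1; cbv zeta; set k := (a + 2 * b + 3 * c)%N.
have nR : (0 : R) <= n%:R by apply: ler0n.
case: (posnP k) => k0.
  have ha : a = 0%N by move: k0; rewrite /k; lia.
  have hb : b = 0%N by move: k0; rewrite /k; lia.
  have hc : c = 0%N by move: k0; rewrite /k; lia.
  have -> : s_abc a b c n = 0.
    rewrite ha hb hc /s_abc mul_one_l.
    rewrite (@mul_ext _ _ fps_one); first by rewrite mul_one_r /fps_one; case: n n1 nR.
    by [].
  rewrite normr0; apply: mulr_ge0; last by apply: exprn_ge0; have := @LL_ge1 R n n1; rewrite /LL; lra.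
  apply: mulr_ge0; last by apply: exprz_ge0.
  by apply: mulr_ge0; [lra | apply: exprz_ge0; lra].
have [h [[_ Hb] hle]] := @final_bnd R a b c k0.
have ez : (2 * (k : int) - 1) = ((2 * k).-1 : nat) :> int by rewrite -/k; lia.
rewrite ez -!exprnP.
apply: le_trans (Hb n n1) _.
rewrite -/k -/(LL R n).
have L1 := @LL_ge1 R n n1.
apply: ler_wpM2r; first by apply: exprn_ge0; lra.
apply: ler_wpM2r; first by apply: exprn_ge0.
apply: le_trans hle _.
have e4 : (4 : R) ^+ k = 2 * 2 ^+ (2 * k).-1.
  rewrite -exprS prednK; last by lia.
  by rewrite exprM (_ : (2 : R) ^+ 2 = 4) //; rewrite expr2; lra.
rewrite e4; lra.
Qed.
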